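(* Let $G$ be a finite abelian group, $\Phi$ a $3$-cocycle on $G$ with values in $\mathbbm{k}^*$, and $g_1,g_2,g_3\in G$. Then the following three identities are mutually equivalent: $\widetilde{\Phi}_{g_1}(g_2,g_3)=\widetilde{\Phi}_{g_1}(g_3,g_2)$; $\widetilde{\Phi}_{g_2}(g_1,g_3)=\widetilde{\Phi}_{g_2}(g_3,g_1)$; $\widetilde{\Phi}_{g_3}(g_1,g_2)=\widetilde{\Phi}_{g_3}(g_2,g_1)$.
   Context: For $g\in G$, $\widetilde{\Phi}_g(x,y)=\frac{\Phi(g,x,y)\Phi(x,y,g)}{\Phi(x,g,y)}$. *)

(* Defs.v *)
From mathcomp Require Import all_boot all_algebra all_fingroup.
Set Implicit Arguments. Unset Strict Implicit. Unset Printing Implicit Defensive.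
Import GRing.Theory.
Local Open Scope ring_scope.

Definition is_3cocycle (gT : finGroupType) (k : fieldType)
  (Phi : gT -> gT -> gT -> k) : Prop :=
  (forall a b c, Phi a b c != 0) /\
  (forall a b c d,
     Phi a b c * Phi a (b * c)%g d * Phi b c d
     = Phi (a * b)%g c d * Phi a b (c * d)%g).

Definition Phitilde (gT : finGroupType) (k : fieldType)
  (Phi : gT -> gT -> gT -> k) (g x y : gT) : k :=
  Phi g x y * Phi x y g / Phi x g y.

(* Main.v *)
Require Import Defs.
From mathcomp Require Import all_boot all_algebra all_fingroup.
From mathcomp Require Import ring.
Import GRing.Theory.
Local Open Scope ring_scope.

Lemma divE (k : fieldType) (u v s t : k) : v != 0 -> t != 0 ->
  (u / v = s / t) <-> (u * t = s * v).
Proof. by move=> hv ht; split => [/eqP|H]; [rewrite eqr_div // => /eqP|apply/eqP; rewrite eqr_div // H]. Qed.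

Lemma key (k : fieldType) (a b c d e f : k) :
  a != 0 -> b != 0 -> c != 0 -> d != 0 -> e != 0 -> f != 0 ->
  ((a * b / d = e * f / c) <-> (a * b * c = d * e * f)) /\
  ((d * e / a = b * c / f) <-> (a * b * c = d * e * f)) /\
  ((c * a / e = f * d / b) <-> (a * b * c = d * e * f)).
Proof.
move=> ha hb hc hd he hf; split; [|split]; rewrite divE //; split => H.
- by apply: (etrans H); ring.
- by apply: (etrans H); ring.
- by apply: (@etrans _ _ (b*c*a)); [ring| rewrite -H; ring].
- by apply: (@etrans _ _ (d*e*f)); [ring| rewrite -H; ring].
- by apply: (@etrans _ _ (c*a*b)); [ring| rewrite H; ring].
- by apply: (@etrans _ _ (a*b*c)); [ring| rewrite H; ring].
Qed.

Theorem lemma4p6 (gT : finGroupType) (k : fieldType)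
  (Phi : gT -> gT -> gT -> k)
  (Habel : forall x y : gT, (x * y)%g = (y * x)%g)
  (Hcoc : is_3cocycle Phi) (g1 g2 g3 : gT) :
  (Phitilde Phi g1 g2 g3 = Phitilde Phi g1 g3 g2 <->
   Phitilde Phi g2 g1 g3 = Phitilde Phi g2 g3 g1) /\
  (Phitilde Phi g2 g1 g3 = Phitilde Phi g2 g3 g1 <->
   Phitilde Phi g3 g1 g2 = Phitilde Phi g3 g2 g1).
Proof.
case: Hcoc => nz _; rewrite /Phitilde.
have [H1 [H2 H3]] := @key k _ _ _ _ _ _ (nz g1 g2 g3) (nz g2 g3 g1) (nz g3 g1 g2)
  (nz g2 g1 g3) (nz g1 g3 g2) (nz g3 g2 g1).
rewrite H1 H2 H3; tauto.
Qed.
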